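(* In the bilocality scenario, let the two sources each prepare the singlet, $\rho=|\Psi^-_{AB_1}\rangle\langle\Psi^-_{AB_1}|\otimes|\Psi^-_{B_2C}\rangle\langle\Psi^-_{B_2C}|$, let $A$ and $C$ measure $A_0=C_0=(\sigma_z+\sigma_x)/\sqrt2$, $A_1=C_1=(\sigma_z-\sigma_x)/\sqrt2$, and let $B$ either (case 14) perform the complete Bell-state measurement on $B_1B_2$, or (case 22) choose $y\in\{0,1\}$ and measure the two-outcome observable $\mathcal B_y=(1-y)\,\sigma_z\otimes\sigma_z+y\,\sigma_x\otimes\sigma_x$. In the strong-eavesdropper scenario (a single eavesdropper who may act jointly on both sources), there is an eavesdropping strategy reproducing exactly the observed distribution $p(abc\mid xyz)$ for all settings, namely preparing $$\tilde\rho=\tfrac14\sum_{\psi\in\{\Phi^+,\Phi^-,\Psi^+,\Psi^-\}}|\psi_{AC}\rangle\langle\psi_{AC}|\otimes|\psi_{B_1B_2}\rangle\langle\psi_{B_1B_2}|$$ with the eavesdropper knowing $\psi$, which achieves guessing probability $3/8$ both for the outcomes $(a,b,c)$ at $x=z=0$ (and $y=0$ in case 22) and for $(a,c)$ at $x=z=0$. Consequently $H_{\min}(ABC\mid E)\le\log_2(8/3)\approx1.41$ and $H_{\min}(AC\mid E)\le\log_2(8/3)\approx1.41$ in both cases.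
   Context: Bell states: $|\Phi^\pm\rangle=(|00\rangle\pm|11\rangle)/\sqrt2$, $|\Psi^\pm\rangle=(|01\rangle\pm|10\rangle)/\sqrt2$; $\sigma_x,\sigma_z$ are Pauli matrices. The min-entropy is $H_{\min}=-\log_2P_{\mathrm{guess}}$, where $P_{\mathrm{guess}}$ is the maximal probability, over eavesdropper strategies allowed by the scenario that reproduce the observed statistics of $A,B,C$, that the eavesdropper's output equals the targeted outcomes; any particular such strategy lower-bounds $P_{\mathrm{guess}}$ and hence upper-bounds $H_{\min}$. *)

(* Defs.v *)
From HB Require Import structures.
From mathcomp Require Import all_boot all_order all_algebra all_field.
From mathcomp Require Import mxtens.
Set Implicit Arguments. Unset Strict Implicit. Unset Printing Implicit Defensive.
Import Order.TTheory GRing.Theory Num.Theory.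
Local Open Scope ring_scope.

Notation C := algC.

Definition dag {m n} (M : 'M[C]_(m, n)) : 'M[C]_(n, m) := map_mx (fun z => z^*) M^T.

Definition proj {n} (v : 'cV[C]_n) : 'M[C]_n := v *m dag v.

Definition e2 (i : 'I_2) : 'cV[C]_2 := delta_mx i 0.
Definition ket2 (i j : 'I_2) : 'cV[C]_(2 * 2) := e2 i *t e2 j.

Definition isqrt2 : C := (sqrtC 2)^-1.

Definition Phip : 'cV[C]_(2*2) := isqrt2 *: (ket2 0 0 + ket2 1 1).
Definition Phim : 'cV[C]_(2*2) := isqrt2 *: (ket2 0 0 - ket2 1 1).
Definition Psip : 'cV[C]_(2*2) := isqrt2 *: (ket2 0 1 + ket2 1 0).
Definition Psim : 'cV[C]_(2*2) := isqrt2 *: (ket2 0 1 - ket2 1 0).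

Definition bell (k : 'I_4) : 'cV[C]_(2*2) :=
  match val k with 0 => Phip | 1 => Phim | 2 => Psip | _ => Psim end.

Definition sz : 'M[C]_2 := \matrix_(i, j) (if i == j then (-1) ^+ i else 0).
Definition sx : 'M[C]_2 := \matrix_(i, j) (if i == j then 0 else 1).

Definition AC_obs (x : 'I_2) : 'M[C]_2 :=
  isqrt2 *: (sz + (-1) ^+ x *: sx).

(* Spectral projector of a +-1-valued observable O for outcome a
   (a = 0 <-> eigenvalue +1, a = 1 <-> eigenvalue -1) *)
Definition pm_proj {n} (O : 'M[C]_n.+1) (a : 'I_2) : 'M[C]_n.+1 :=
  2^-1 *: (1%:M + (-1) ^+ a *: O).

Definition Aproj (x a : 'I_2) : 'M[C]_2 := pm_proj (AC_obs x) a.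
Definition Cproj (z c : 'I_2) : 'M[C]_2 := pm_proj (AC_obs z) c.

(* Case 14: complete Bell-state measurement on B1B2 (no input: y : 'I_1) *)
Definition B14 (y : 'I_1) (b : 'I_4) : 'M[C]_(2*2) := proj (bell b).

Definition Bobs22 (y : 'I_2) : 'M[C]_(2*2) :=
  (1 - (y : nat)%:R) *: (sz *t sz) + (y : nat)%:R *: (sx *t sx).
Definition B22 (y b : 'I_2) : 'M[C]_(2*2) := pm_proj (Bobs22 y) b.

(* Four-qubit register ordered A, B1, B2, C (Kronecker order), dimension 16. *)
Definition ABC_op (MA : 'M[C]_2) (MB : 'M[C]_(2*2)) (MC : 'M[C]_2) : 'M[C]_16 :=
  MA *t MB *t MC.

Definition pABC (rho : 'M[C]_16) {ny nb} (Bm : 'I_ny -> 'I_nb -> 'M[C]_(2*2))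
  (x : 'I_2) (y : 'I_ny) (z : 'I_2) (a : 'I_2) (b : 'I_nb) (c : 'I_2) : C :=
  \tr (rho *m ABC_op (Aproj x a) (Bm y b) (Cproj z c)).

Definition pAC (rho : 'M[C]_16) (x z a c : 'I_2) : C :=
  \tr (rho *m ABC_op (Aproj x a) 1%:M (Cproj z c)).

Definition rho_true : 'M[C]_16 := proj Psim *t proj Psim.

Definition SWAP : 'M[C]_(2*2) :=
  \sum_(i < 2) \sum_(j < 2) ket2 i j *m (ket2 j i)^T.

(* Reordering unitary from register order (A,C,B1,B2) to (A,B1,B2,C):
   first swap factors 2,3 (-> A,B1,C,B2), then factors 3,4 (-> A,B1,B2,C). *)
Definition reorder : 'M[C]_16 :=
  ((1%:M : 'M[C]_(2*2)) *t SWAP : 'M[C]_16) *m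
  ((1%:M : 'M[C]_2) *t SWAP *t (1%:M : 'M[C]_2) : 'M[C]_16).

(* |psi_AC><psi_AC| (x) |psi_B1B2><psi_B1B2|, written in register order A,B1,B2,C *)
Definition sigma (k : 'I_4) : 'M[C]_16 :=
  reorder *m (proj (bell k) *t proj (bell k) : 'M[C]_16) *m dag reorder.

(* Eve's state: uniform mixture, Eve holding the classical label k *)
Definition rho_tilde : 'M[C]_16 := \sum_(k < 4) 4^-1 *: sigma k.

(* Eve's success probability for guessing (a,b,c) at x = z = 0, y = y0, when
   she guesses g k upon knowing the label k *)
Definition guessABC {ny nb} (Bm : 'I_ny -> 'I_nb -> 'M[C]_(2*2)) (y0 : 'I_ny)
  (g : 'I_4 -> 'I_2 * 'I_nb * 'I_2) : C :=
  \sum_(k < 4) 4^-1 * pABC (sigma k) Bm 0 y0 0 (g k).1.1 (g k).1.2 (g k).2.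

Definition guessAC (g : 'I_4 -> 'I_2 * 'I_2) : C :=
  \sum_(k < 4) 4^-1 * pAC (sigma k) 0 0 (g k).1 (g k).2.

Definition opt_value {T : Type} (f : T -> C) (p : C) : Prop :=
  (exists g, f g = p) /\ (forall g, f g <= p).

(* Main.v *)
Require Import Defs.
From HB Require Import structures.
From mathcomp Require Import all_boot all_order all_algebra all_field.
From mathcomp Require Import mxtens ring.
Import Order.TTheory GRing.Theory Num.Theory.
Local Open Scope ring_scope.

Lemma r2 : sqrtC 2 * sqrtC 2 = 2 :> C.
Proof. by rewrite -expr2 sqrtCK. Qed.
Lemma rn0 : sqrtC 2 != 0 :> C.
Proof. by rewrite sqrtC_eq0 pnatr_eq0. Qed.
Lemma conj_s : isqrt2^* = isqrt2.
Proof.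
rewrite /isqrt2 fmorphV; congr (_^-1); apply/CrealP; apply: ger0_real.
by rewrite sqrtC_ge0 ler0n.
Qed.

Ltac sfield :=
  let r := fresh "r" in let H := fresh "H" in let Hr := fresh "Hr" in
  rewrite /isqrt2; move: r2 rn0; move: (sqrtC 2) => r H Hr; field: H;
  rewrite ?mulf_neq0 ?pnatr_eq0 ?expf_neq0 //.

Lemma tensE m n p q (A : 'M[C]_(m.+1, n.+1)) (B : 'M[C]_(p.+1,q.+1)) i j :
  (i < m.+1 * p.+1)%N -> (j < n.+1 * q.+1)%N ->
  (A *t B) (inord i) (inord j) =
  A (inord (i %/ p.+1)%N) (inord (j %/ q.+1)%N) * B (inord (i %% p.+1)%N) (inord (j %% q.+1)%N).
Proof.
move=> hi hj; rewrite mxE; congr (A _ _ * B _ _); apply: val_inj => /=;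
  rewrite ?inordK //.
- by rewrite ltn_divLR.
- by rewrite ltn_divLR.
- by rewrite ltn_mod.
- by rewrite ltn_mod.
Qed.

Lemma tensV m p (A : 'cV[C]_(m.+1)) (B : 'cV[C]_(p.+1)) i :
  (i < m.+1 * p.+1)%N ->
  (A *t B) (inord i) 0 = A (inord (i %/ p.+1)%N) 0 * B (inord (i %% p.+1)%N) 0.
Proof.
move=> hi; rewrite mxE; congr (A _ _ * B _ _); apply: val_inj => /=;
  rewrite ?inordK //.
- by rewrite ltn_divLR.
- by rewrite ltn_mod.
Qed.

Lemma ABC_opE_old MA MB MC i j : (i < 16)%N -> (j < 16)%N ->
  ABC_op MA MB MC (inord i) (inord j) =
  MA (inord (i %/ 2 %/ 4)) (inord (j %/ 2 %/ 4)) *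
  MB (inord (i %/ 2 %% 4)) (inord (j %/ 2 %% 4)) * MC (inord (i %% 2)) (inord (j %% 2)).
Proof.
move=> hi hj; rewrite /ABC_op (@tensE 7 7 1 1) // (@tensE 1 1 3 3) //.
by rewrite ltn_divLR.
by rewrite ltn_divLR.
Qed.

Lemma inord_eqv n i (a : 'I_n.+1) : (i <= n)%N -> (inord i == a) = (i == val a).
Proof. by move=> hi; rewrite -val_eqE /= inordK. Qed.

Lemma e2E (a : 'I_2) i : (i < 2)%N -> e2 a (inord i) 0 = (i == a)%:R.
Proof. move=> hi; by rewrite /e2 mxE inord_eqv // andbT. Qed.


Notation "''o' n" := (@Ordinal 16 n isT) (at level 0, n at level 0).
Definition spv (l : seq ('I_16 * C)) : 'cV[C]_16 :=
  \col_i \sum_(p <- l) p.2 * (i == p.1)%:R.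

Lemma sum_delta (F : 'I_16 -> C) k : \sum_i (i == k)%:R * F i = F k.
Proof.
rewrite (bigD1 k) //= eqxx mul1r big1 ?addr0 // => i /negbTE ->; by rewrite mul0r.
Qed.

Lemma lin_spv (F : 'I_16 -> C) (l : seq ('I_16 * C)) (c : 'I_16 * C -> C) :
  \sum_i (\sum_(p <- l) c p * (i == p.1)%:R) * F i = \sum_(p <- l) c p * F p.1.
Proof.
under eq_bigr do rewrite big_distrl /=.
rewrite exchange_big /=; apply: eq_bigr => p _.
under eq_bigr do rewrite -mulrA.
by rewrite -big_distrr /= sum_delta.
Qed.

Lemma tr_spv l (M : 'M[C]_16) :
  \tr (proj (spv l) *m M) = \sum_(p <- l) \sum_(q <- l) p.2 * q.2^* * M q.1 p.1.
Proof.
rewrite /mxtrace /proj.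
transitivity (\sum_i (spv l) i 0 * \sum_j ((spv l) j 0)^* * M j i).
  apply: eq_bigr => i _; rewrite mxE big_distrr /=; apply: eq_bigr => j _.
  by rewrite !mxE big_ord1 !mxE mulrA.
have E : forall i, \sum_j ((spv l) j 0)^* * M j i = \sum_(q <- l) q.2^* * M q.1 i.
  move=> i; rewrite (eq_bigr (fun j => (\sum_(q<-l) q.2^* * (j == q.1)%:R) * M j i)).
    exact: (lin_spv _ _ (fun q => q.2^*)).
  move=> j _; congr (_ * _); rewrite mxE rmorph_sum /=; apply: eq_bigr => q _.
  by rewrite rmorphM /= conjC_nat.
under eq_bigr do rewrite E.
rewrite (eq_bigr (fun i => (\sum_(p<-l) p.2 * (i == p.1)%:R) * \sum_(q <- l) q.2^* * M q.1 i)).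
  rewrite (lin_spv _ _ (fun q => q.2)); apply: eq_bigr => p _; rewrite big_distrr /=; apply: eq_bigr => q _.
  by rewrite mulrA.
by move=> i _; rewrite mxE.
Qed.


Definition ia (i : nat) : nat := odd i./2./2./2.
Definition ib (i : nat) : nat := (odd i./2./2).*2 + odd i./2.
Definition ic (i : nat) : nat := odd i.

Lemma ia_lt (i : 'I_16) : (ia i < 2)%N. Proof. by rewrite /ia; case: odd. Qed.
Lemma ib_lt (i : 'I_16) : (ib i < 4)%N. Proof. by rewrite /ib; case: odd; case: odd. Qed.
Lemma ic_lt (i : 'I_16) : (ic i < 2)%N. Proof. by rewrite /ic; case: odd. Qed.

Definition oa (i : 'I_16) : 'I_2 := Ordinal (ia_lt i).
Definition ob (i : 'I_16) : 'I_4 := Ordinal (ib_lt i).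
Definition oc (i : 'I_16) : 'I_2 := Ordinal (ic_lt i).

Ltac ord16 i := let h := fresh "h" in
  case: i => i h; do 16 (case: i h => [|i] h; [idtac|]); last by [].

Lemma idx_ok (i : 'I_16) :
  [/\ (i %/ 2 %/ (2*2) = ia i)%N, (i %/ 2 %% (2*2) = ib i)%N & (i %% 2 = ic i)%N].
Proof. by case: i => i h; do 16 (case: i h => [|i] h; first by []). Qed.

Lemma ABC_opE MA MB MC (i j : 'I_16) :
  ABC_op MA MB MC i j = MA (oa i) (oa j) * MB (ob i) (ob j) * MC (oc i) (oc j).
Proof.
rewrite /ABC_op !mxE; congr (MA _ _ * MB _ _ * MC _ _); apply: val_inj => /=;
  by case: (idx_ok i) => ? ? ?; case: (idx_ok j) => ? ? ?.
Qed.

Definition fsz (i j : nat) : C := if i == j then (-1)^+i else 0.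
Definition fsx (i j : nat) : C := if i == j then 0 else 1.
Definition fA (x a i j : nat) : C :=
  2^-1 * ((i == j)%:R + (-1)^+a * (isqrt2 * (fsz i j + (-1)^+x * fsx i j))).

Lemma AprojE (x a i j : 'I_2) : Aproj x a i j = fA x a i j.
Proof. by rewrite /Aproj /pm_proj /AC_obs !mxE. Qed.
Lemma CprojE (x a i j : 'I_2) : Cproj x a i j = fA x a i j.
Proof. by rewrite /Cproj /pm_proj /AC_obs !mxE. Qed.

Definition fbell (b i : nat) : C :=
  match b, i with
  | 0, 0 => 1 | 0, 3 => 1 | 1, 0 => 1 | 1, 3 => -1
  | 2, 1 => 1 | 2, 2 => 1 | 3, 1 => 1 | 3, 2 => -1 | _, _ => 0 end.

Lemma bellE (b i : 'I_4) : bell b i 0 = isqrt2 * fbell b i.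
Proof.
case: b => [[|[|[|[|b]]]] hb] //; case: i => [[|[|[|[|i]]]] hi] //;
 rewrite /bell /Phip /Phim /Psip /Psim /ket2 !mxE /=; ring.
Qed.

Lemma B14E y (b i j : 'I_4) : B14 y b i j = isqrt2 * isqrt2 * (fbell b i * fbell b j).
Proof.
rewrite /B14 /proj /dag mxE big_ord1 !mxE !bellE rmorphM /= conj_s.
have -> : (fbell b j)^* = fbell b j.
  case: b => [[|[|[|[|]]]] ?] //=; case: j => [[|[|[|[|]]]] ?] //=;
  by rewrite ?rmorphN ?rmorph1 ?rmorph0.
ring.
Qed.

Definition fB22 (y b i j : nat) : C := 2^-1 * ((i == j)%:R + (-1)^+b *
   ((1 - y%:R) * (fsz i./2 j./2 * fsz (odd i) (odd j)) + y%:R * (fsx i./2 j./2 * fsx (odd i) (odd j)))).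

Lemma B22E (y b : 'I_2) (i j : 'I_4) : B22 y b i j = fB22 y b i j.
Proof.
rewrite /B22 /pm_proj /Bobs22 /fB22 !mxE.
by case: i => [[|[|[|[|i]]]] hi] //; case: j => [[|[|[|[|j]]]] hj].
Qed.

Lemma oneE (i j : 'I_4) : (1%:M : 'M[C]_(2*2)) i j = (i == j :> nat)%:R.
Proof. by rewrite !mxE. Qed.

Lemma pABC_spv l ny nb (Bm : 'I_ny -> 'I_nb -> 'M[C]_(2*2)) x y z a b c :
  pABC (proj (spv l)) Bm x y z a b c =
  \sum_(p <- l) \sum_(q <- l) p.2 * q.2^* *
    (fA x a (ia q.1) (ia p.1) * Bm y b (ob q.1) (ob p.1) * fA z c (ic q.1) (ic p.1)).
Proof.
rewrite /pABC tr_spv; apply: eq_bigr => p _; apply: eq_bigr => q _.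
by rewrite ABC_opE AprojE CprojE.
Qed.

Lemma pAC_spv l x z a c :
  pAC (proj (spv l)) x z a c =
  \sum_(p <- l) \sum_(q <- l) p.2 * q.2^* *
    (fA x a (ia q.1) (ia p.1) * (ib q.1 == ib p.1)%:R * fA z c (ic q.1) (ic p.1)).
Proof.
rewrite /pAC tr_spv; apply: eq_bigr => p _; apply: eq_bigr => q _.
by rewrite ABC_opE AprojE CprojE oneE.
Qed.

Lemma conj_i2 : (2^-1 : C)^* = 2^-1.
Proof. by rewrite fmorphV /= conjC_nat. Qed.
Lemma conj_ni2 : (- 2^-1 : C)^* = - 2^-1.
Proof. by rewrite rmorphN /= conj_i2. Qed.



Lemma SWAPE (i j : 'I_4) : SWAP i j = (j == (odd i).*2 + odd i./2 :> nat)%:R.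
Proof.
rewrite /SWAP summxE; under eq_bigr do rewrite summxE.
rewrite !big_ord_recl !big_ord0 !mxE !big_ord1 !mxE.
case: i => [[|[|[|[|i]]]] hi] //; case: j => [[|[|[|[|j]]]] hj] //=; ring.
Qed.

Definition f1n n := (odd n./2./2./2).*2.*2.*2 + (odd n./2./2).*2.*2 + (odd n).*2 + odd n./2.
Definition f2n n := (odd n./2./2./2).*2.*2.*2 + (odd n./2).*2.*2 + (odd n./2./2).*2 + odd n.

Lemma f1_lt (i : 'I_16) : (f1n i < 16)%N.
Proof. by case: i => i h; do 16 (case: i h => [|i] h; first by []). Qed.
Lemma f2_lt (i : 'I_16) : (f2n i < 16)%N.
Proof. by case: i => i h; do 16 (case: i h => [|i] h; first by []). Qed.
Definition f1o (i : 'I_16) : 'I_16 := Ordinal (f1_lt i).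
Definition f2o (i : 'I_16) : 'I_16 := Ordinal (f2_lt i).

Definition M1 : 'M[C]_16 := ((1%:M : 'M[C]_(2*2)) *t SWAP : 'M[C]_16).
Definition M2 : 'M[C]_16 := ((1%:M : 'M[C]_2) *t SWAP *t (1%:M : 'M[C]_2) : 'M[C]_16).

Lemma M2E (i j : 'I_16) : M2 i j = (j == f2o i)%:R.
Proof.
rewrite -[M2]/(ABC_op 1%:M SWAP 1%:M) ABC_opE SWAPE !mxE -!natrM; congr (_%:R).
rewrite -val_eqE /=.
case: i => i h; do 16 (case: i h => [|i] h; [case: j => j hj; do 16 (case: j hj => [|j] hj; first by []); by [] |]); by [].
Qed.

Lemma M1E (i j : 'I_16) : M1 i j = (j == f1o i)%:R.
Proof.
rewrite /M1 mxE SWAPE !mxE -!natrM; congr (_%:R).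
rewrite -val_eqE /=.
case: i => i h; do 16 (case: i h => [|i] h; [case: j => j hj; do 16 (case: j hj => [|j] hj; first by []); by [] |]); by [].
Qed.

Lemma permM (M : 'M[C]_16) (f : 'I_16 -> 'I_16) (v : 'cV[C]_16) :
  (forall i j, M i j = (j == f i)%:R) -> M *m v = \col_i v (f i) 0.
Proof.
move=> H; apply/matrixP => i k; rewrite [k]ord1 !mxE.
under eq_bigr do rewrite H.
exact: (sum_delta (fun j => v j 0)).
Qed.

Lemma reorderE (v : 'cV[C]_16) : reorder *m v = \col_i v (f2o (f1o i)) 0.
Proof.
rewrite -[reorder]/(M1 *m M2) -mulmxA (permM _ _ _ M2E) (permM _ _ _ M1E).
by apply/matrixP => i k; rewrite !mxE.
Qed.

Lemma dag_mul m n p (A : 'M[C]_(m, n)) (B : 'M[C]_(n, p)) : dag (A *m B) = dag B *m dag A.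
Proof. by rewrite /dag trmx_mul map_mxM. Qed.

Lemma dag_tens m n p q (A : 'M[C]_(m,n)) (B : 'M[C]_(p,q)) : dag (A *t B) = dag A *t dag B.
Proof. by apply/matrixP => i j; rewrite !mxE rmorphM. Qed.

Lemma proj_tens (u w : 'cV[C]_(2*2)) : proj u *t proj w = proj (u *t w).
Proof. rewrite /proj -tensmx_mul; congr (_ *m _); apply/matrixP => i j; by rewrite !mxE rmorphM. Qed.

Lemma sigma_proj k : sigma k = proj (reorder *m (bell k *t bell k)).
Proof. by rewrite /sigma proj_tens /proj [X in _ = _ *m X]dag_mul !mulmxA. Qed.

Definition hi4 n := (odd n./2./2./2).*2 + odd n./2./2.
Definition lo4 n := (odd n./2).*2 + odd n.
Lemma hi4_lt (i : 'I_16) : (hi4 i < 4)%N. Proof. by rewrite /hi4; case: odd; case: odd. Qed.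
Lemma lo4_lt (i : 'I_16) : (lo4 i < 4)%N. Proof. by rewrite /lo4; case: odd; case: odd. Qed.

Lemma tens_bell (k : 'I_4) (i : 'I_16) :
  (bell k *t bell k) i 0 = bell k (Ordinal (hi4_lt i)) 0 * bell k (Ordinal (lo4_lt i)) 0.
Proof.
rewrite mxE; congr (bell k _ _ * bell k _ _); apply: val_inj => /=;
 by case: i => i h; do 16 (case: i h => [|i] h; first by []).
Qed.

Definition lt0 : seq ('I_16 * C) :=
  [:: ('o 5, 2^-1); ('o 6, -2^-1); ('o 9, -2^-1); ('o 10, 2^-1)].
Definition lk (k : nat) : seq ('I_16 * C) :=
  match k with
  | 0 => [:: ('o 0, 2^-1); ('o 6, 2^-1); ('o 9, 2^-1); ('o 15, 2^-1)]
  | 1 => [:: ('o 0, 2^-1); ('o 6, -2^-1); ('o 9, -2^-1); ('o 15, 2^-1)]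
  | 2 => [:: ('o 3, 2^-1); ('o 5, 2^-1); ('o 10, 2^-1); ('o 12, 2^-1)]
  | _ => [:: ('o 3, 2^-1); ('o 5, -2^-1); ('o 10, -2^-1); ('o 12, 2^-1)]
  end.

Lemma rho_true_spv : rho_true = proj (spv lt0).
Proof.
rewrite /rho_true proj_tens; congr proj.
apply/matrixP => i j; rewrite [j]ord1.
rewrite -[Psim]/(bell (@Ordinal 4 3 isT)) tens_bell !bellE mxE /lt0 !big_cons big_nil.
case: i => i h; do 16 (case: i h => [|i] h; [rewrite /hi4 /lo4 /=; sfield|]); by [].
Qed.

Lemma sigma_spv (k : 'I_4) : sigma k = proj (spv (lk k)).
Proof.
rewrite sigma_proj reorderE; congr proj.
apply/matrixP => i j; rewrite [j]ord1 mxE tens_bell !bellE mxE.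
case: k => [[|[|[|[|k]]]] hk] //; rewrite /lk !big_cons big_nil;
case: i => i h; do 16 (case: i h => [|i] h; [rewrite /hi4 /lo4 /=; sfield|]); by [].
Qed.

Lemma pABC_tilde ny nb (Bm : 'I_ny -> 'I_nb -> 'M[C]_(2*2)) x y z a b c :
  pABC rho_tilde Bm x y z a b c = \sum_(k < 4) 4^-1 * pABC (sigma k) Bm x y z a b c.
Proof.
rewrite /pABC /rho_tilde mulmx_suml raddf_sum; apply: eq_bigr => k _.
rewrite -scalemxAl; exact: mxtraceZ.
Qed.

Lemma pAC_tilde x z a c :
  pAC rho_tilde x z a c = \sum_(k < 4) 4^-1 * pAC (sigma k) x z a c.
Proof.
rewrite /pAC /rho_tilde mulmx_suml raddf_sum; apply: eq_bigr => k _.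
rewrite -scalemxAl; exact: mxtraceZ.
Qed.

Definition realL (l : seq ('I_16 * C)) := forall p, p \in l -> p.2^* = p.2.

Lemma realL4 (c1 c2 c3 c4 : C) (i1 i2 i3 i4 : 'I_16) :
  c1^* = c1 -> c2^* = c2 -> c3^* = c3 -> c4^* = c4 ->
  realL [:: (i1, c1); (i2, c2); (i3, c3); (i4, c4)].
Proof. by move=> h1 h2 h3 h4 p; rewrite !inE => /or4P [] /eqP ->. Qed.

Lemma realL_lt0 : realL lt0.
Proof. by apply: realL4; rewrite ?conj_i2 ?conj_ni2. Qed.
Lemma realL_lk (k : 'I_4) : realL (lk k).
Proof. by case: k => [[|[|[|[|k]]]] hk] //=; apply: realL4; rewrite ?conj_i2 ?conj_ni2. Qed.

Lemma sum4 (G : 'I_16 * C -> 'I_16 * C -> C) p1 p2 p3 p4 :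
  \sum_(p <- [:: p1; p2; p3; p4]) \sum_(q <- [:: p1; p2; p3; p4]) G p q =
  G p1 p1 + G p1 p2 + G p1 p3 + G p1 p4 + G p2 p1 + G p2 p2 + G p2 p3 + G p2 p4 +
  G p3 p1 + G p3 p2 + G p3 p3 + G p3 p4 + G p4 p1 + G p4 p2 + G p4 p3 + G p4 p4.
Proof. by rewrite !big_cons !big_nil !addr0 !addrA. Qed.

Lemma pABC14_spv l x y z a b c : realL l ->
  pABC (proj (spv l)) B14 x y z a b c =
  \sum_(p <- l) \sum_(q <- l) p.2 * q.2 *
    (fA x a (ia q.1) (ia p.1) * (isqrt2 * isqrt2 * (fbell b (ib q.1) * fbell b (ib p.1)))
     * fA z c (ic q.1) (ic p.1)).
Proof. move=> H; rewrite pABC_spv; apply: eq_bigr => p _; apply: eq_big_seq => q Hq; by rewrite B14E H. Qed.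

Lemma pABC22_spv l x y z a b c : realL l ->
  pABC (proj (spv l)) B22 x y z a b c =
  \sum_(p <- l) \sum_(q <- l) p.2 * q.2 *
    (fA x a (ia q.1) (ia p.1) * fB22 y b (ib q.1) (ib p.1) * fA z c (ic q.1) (ic p.1)).
Proof. move=> H; rewrite pABC_spv; apply: eq_big_seq => p _; apply: eq_big_seq => q Hq; by rewrite B22E H. Qed.

Ltac expand := rewrite !sum4 /= /fA /fB22 /fsz /fsx /ia /ib /ic /=.

Lemma eq14 x y z a b c : pABC rho_tilde B14 x y z a b c = pABC rho_true B14 x y z a b c.
Proof.
rewrite pABC_tilde rho_true_spv !big_ord_recl big_ord0 !sigma_spv.
rewrite !pABC14_spv ?realL_lk ?realL_lt0 /lk /lt0 /=.
expand.
case: b => [[|[|[|[|b]]]] hb] //=; sfield.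
all: by apply: realL4; rewrite ?conj_i2 ?conj_ni2.
Qed.

Lemma eq22 x y z a b c : pABC rho_tilde B22 x y z a b c = pABC rho_true B22 x y z a b c.
Proof.
rewrite pABC_tilde rho_true_spv !big_ord_recl big_ord0 !sigma_spv.
rewrite !pABC22_spv /lk /lt0 /=.
expand.
sfield.
all: by apply: realL4; rewrite ?conj_i2 ?conj_ni2.
Qed.

Lemma pAC_spv' l x z a c : realL l ->
  pAC (proj (spv l)) x z a c =
  \sum_(p <- l) \sum_(q <- l) p.2 * q.2 *
    (fA x a (ia q.1) (ia p.1) * (ib q.1 == ib p.1)%:R * fA z c (ic q.1) (ic p.1)).
Proof. move=> H; rewrite pAC_spv; apply: eq_bigr => p _; apply: eq_big_seq => q Hq; by rewrite H. Qed.

Definition tin (k a c : nat) : nat :=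
  if k == 0 then (if a == c then 4 else 0) else if k == 3 then (if a == c then 0 else 4) else 2.
Definition t14 (k a b c : nat) : nat := if b != k then 0 else tin k a c.
Definition t22 (k a b c : nat) : nat := if b != (2 <= k)%N then 0 else tin k a c.
Definition mk (k : nat) : nat := if (k == 0) || (k == 3) then 4 else 2.

Lemma tin_le k a c : (tin k a c <= mk k)%N.
Proof. by rewrite /tin /mk; case: (k == 0); case: (k == 3); case: (a == c). Qed.
Lemma t14_le k a b c : (t14 k a b c <= mk k)%N.
Proof. rewrite /t14; case: ifP => _ //; exact: tin_le. Qed.
Lemma t22_le k a b c : (t22 k a b c <= mk k)%N.
Proof. rewrite /t22; case: ifP => _ //; exact: tin_le. Qed.

Lemma V14 (k : 'I_4) (y : 'I_1) (a : 'I_2) (b : 'I_4) (c : 'I_2) :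
  pABC (sigma k) B14 0 y 0 a b c = (t14 k a b c)%:R / 8%:R.
Proof.
rewrite sigma_spv (pABC14_spv _ _ _ _ _ _ _ (realL_lk k)).
case: k => [[|[|[|[|k]]]] hk] //; rewrite /lk /=; expand;
case: a => [[|[|a]] ha] //; case: c => [[|[|c]] hc] //; case: b => [[|[|[|[|b]]]] hb] //;
rewrite /t14 /tin /=; sfield.
Qed.

Lemma V22 (k : 'I_4) (a b c : 'I_2) :
  pABC (sigma k) B22 0 0 0 a b c = (t22 k a b c)%:R / 8%:R.
Proof.
rewrite sigma_spv (pABC22_spv _ _ _ _ _ _ _ (realL_lk k)).
case: k => [[|[|[|[|k]]]] hk] //; rewrite /lk /=; expand;
case: a => [[|[|a]] ha] //; case: c => [[|[|c]] hc] //; case: b => [[|[|b]] hb] //;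
rewrite /t22 /tin /=; sfield.
Qed.

Lemma VAC (k : 'I_4) (a c : 'I_2) :
  pAC (sigma k) 0 0 a c = (tin k a c)%:R / 8%:R.
Proof.
rewrite sigma_spv (pAC_spv' _ _ _ _ _ (realL_lk k)).
case: k => [[|[|[|[|k]]]] hk] //; rewrite /lk /=; expand;
case: a => [[|[|a]] ha] //; case: c => [[|[|c]] hc] //;
rewrite /tin /=; sfield.
Qed.

Lemma guess_bound (t : 'I_4 -> nat) : (forall k, t k <= mk k)%N ->
  \sum_(k < 4) 4^-1 * ((t k)%:R / 8%:R) <= 3%:R / 8%:R :> C.
Proof.
move=> H.
apply: (@le_trans _ _ (\sum_(k < 4) 4^-1 * ((mk k)%:R / 8%:R))).
  apply: ler_sum => k _; apply: ler_wpM2l; first by rewrite invr_ge0 ler0n.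
  apply: ler_wpM2r; first by rewrite invr_ge0 ler0n.
  by rewrite ler_nat.
rewrite !big_ord_recl big_ord0 /mk /=.
have -> : (4^-1 * (4%:R / 8%:R) + (4^-1 * (2%:R / 8%:R) + (4^-1 * (2%:R / 8%:R) +
   (4^-1 * (4%:R / 8%:R) + 0))) : C) = 3%:R / 8%:R.
  by field; rewrite ?pnatr_eq0.
by [].
Qed.

Definition o2 n (h : (n < 2)%N) : 'I_2 := Ordinal h.

Definition g14 (k : 'I_4) : 'I_2 * 'I_4 * 'I_2 :=
  match val k with
  | 0 => (@Ordinal 2 0 isT, @Ordinal 4 0 isT, @Ordinal 2 0 isT)
  | 1 => (@Ordinal 2 0 isT, @Ordinal 4 1 isT, @Ordinal 2 0 isT)
  | 2 => (@Ordinal 2 0 isT, @Ordinal 4 2 isT, @Ordinal 2 0 isT)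
  | _ => (@Ordinal 2 0 isT, @Ordinal 4 3 isT, @Ordinal 2 1 isT)
  end.
Definition g22 (k : 'I_4) : 'I_2 * 'I_2 * 'I_2 :=
  match val k with
  | 0 => (@Ordinal 2 0 isT, @Ordinal 2 0 isT, @Ordinal 2 0 isT)
  | 1 => (@Ordinal 2 0 isT, @Ordinal 2 0 isT, @Ordinal 2 0 isT)
  | 2 => (@Ordinal 2 0 isT, @Ordinal 2 1 isT, @Ordinal 2 0 isT)
  | _ => (@Ordinal 2 0 isT, @Ordinal 2 1 isT, @Ordinal 2 1 isT)
  end.
Definition gAC (k : 'I_4) : 'I_2 * 'I_2 :=
  match val k with
  | 3 => (@Ordinal 2 0 isT, @Ordinal 2 1 isT)
  | _ => (@Ordinal 2 0 isT, @Ordinal 2 0 isT)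
  end.

Lemma opt14 : opt_value (guessABC B14 ord0) (3%:R / 8%:R).
Proof.
split.
  exists g14; rewrite /guessABC; under eq_bigr do rewrite V14.
  rewrite !big_ord_recl big_ord0 /= /t14 /tin /=.
  by field; rewrite ?pnatr_eq0.
move=> g; rewrite /guessABC; under eq_bigr do rewrite V14.
by apply: (guess_bound (fun k => t14 k (g k).1.1 (g k).1.2 (g k).2)) => k; exact: t14_le.
Qed.

Lemma opt22 : opt_value (guessABC B22 0) (3%:R / 8%:R).
Proof.
split.
  exists g22; rewrite /guessABC; under eq_bigr do rewrite V22.
  rewrite !big_ord_recl big_ord0 /= /t22 /tin /=.
  by field; rewrite ?pnatr_eq0.
move=> g; rewrite /guessABC; under eq_bigr do rewrite V22.
by apply: (guess_bound (fun k => t22 k (g k).1.1 (g k).1.2 (g k).2)) => k; exact: t22_le.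
Qed.

Lemma optAC : opt_value guessAC (3%:R / 8%:R).
Proof.
split.
  exists gAC; rewrite /guessAC; under eq_bigr do rewrite VAC.
  rewrite !big_ord_recl big_ord0 /= /tin /=.
  by field; rewrite ?pnatr_eq0.
move=> g; rewrite /guessAC; under eq_bigr do rewrite VAC.
by apply: (guess_bound (fun k => tin k (g k).1 (g k).2)) => k; exact: tin_le.
Qed.

Theorem mainTheorem4 :
  (* case 14: complete Bell-state measurement by B *)
  ((forall x y z a b c,
       pABC rho_tilde B14 x y z a b c = pABC rho_true B14 x y z a b c)
   /\ opt_value (guessABC B14 ord0) (3%:R / 8%:R)
   /\ opt_value guessAC (3%:R / 8%:R))
  /\
  (* case 22: B measures B_y = (1-y) sz(x)sz + y sx(x)sx *)
  ((forall x y z a b c,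
       pABC rho_tilde B22 x y z a b c = pABC rho_true B22 x y z a b c)
   /\ opt_value (guessABC B22 0) (3%:R / 8%:R)
   /\ opt_value guessAC (3%:R / 8%:R)).
Proof.
split; split.
- exact: eq14.
- split; [exact: opt14 | exact: optAC].
- exact: eq22.
- split; [exact: opt22 | exact: optAC].
Qed.
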